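(* Let $(A,+,\circ)$ be a finite skew brace. The following are equivalent: (i) $A$ is a $*$-nilpotent skew brace of nilpotent type; (ii) $A$ is a right $*$-nilpotent skew brace of nilpotent type and $(A,\circ)$ is nilpotent; (iii) $A$ is centrally nilpotent.
   Context: A skew brace is a triple $(A,+,\circ)$ where $(A,+)$ and $(A,\circ)$ are groups (not necessarily abelian; $+$ is written additively) such that $x\circ(y+z)=(x\circ y)-x+(x\circ z)$ for all $x,y,z\in A$; the common neutral element is $0$. It is of nilpotent type if $(A,+)$ is nilpotent. Let $\lambda_x(y)=-x+(x\circ y)$ and $x*y=\lambda_x(y)-y$; $[x,y]_+=x+y-x-y$. For subsets $X,Y$, $X*Y$ is the subgroup of $(A,+)$ generated by $\{x*y\}$. Left and right series: $A^1=A$, $A^{n+1}=A*A^n$; $A^{(1)}=A$, $A^{(n+1)}=A^{(n)}*A$. $A$ is left (resp. right) $*$-nilpotent if $A^n=0$ (resp. $A^{(n)}=0$) for some $n$, and $*$-nilpotent if both. An ideal is a subgroup $I$ of $(A,+)$ with $\lambda_a(I)\subseteq I$ for all $a\in A$ that is normal in both $(A,+)$ and $(A,\circ)$. The center is $\zeta(A)=\{x\in A: x*y=y*x=[x,y]_+=0\ \forall y\in A\}$. $A$ is centrally nilpotent if there is a chain of ideals $0=I_0\leq\dots\leq I_n=A$ with $I_{j+1}/I_j\leq\zeta(A/I_j)$ for all $j$. *)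

(* Defs.v *)
From mathcomp Require Import all_boot.
Set Implicit Arguments. Unset Strict Implicit. Unset Printing Implicit Defensive.

Section Groups.
Variable T : finType.

Definition is_group (op : T -> T -> T) (inv : T -> T) (e : T) : Prop :=
  [/\ (forall x y w, op x (op y w) = op (op x y) w),
      (forall x, op e x = x), (forall x, op x e = x),
      (forall x, op (inv x) x = e) & (forall x, op x (inv x) = e)].

Definition is_subgrp (op : T -> T -> T) (inv : T -> T) (e : T) (H : {set T}) : bool :=
  [&& e \in H, [forall x in H, forall y in H, op x y \in H]
   & [forall x in H, inv x \in H]].

Definition gen_grp op inv e (X : {set T}) : {set T} :=
  \bigcap_(H : {set T} | is_subgrp op inv e H && (X \subset H)) H.

Definition grp_comm (op : T -> T -> T) (inv : T -> T) x y :=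
  op (op (op x y) (inv x)) (inv y).

Fixpoint lcs op inv e (n : nat) : {set T} :=
  if n is m.+1 then
    gen_grp op inv e [set grp_comm op inv x y | x in [set: T], y in lcs op inv e m]
  else [set: T].

Definition nilpotent_grp op inv e : Prop := exists n, lcs op inv e n = [set e].
End Groups.

Section SkewBrace.
Variables (T : finType) (add : T -> T -> T) (opp : T -> T) (z : T)
          (circ : T -> T -> T) (cinv : T -> T).

Definition skew_brace : Prop :=
  [/\ is_group add opp z, is_group circ cinv z &
      forall x y w, circ x (add y w) = add (add (circ x y) (opp x)) (circ x w)].

Definition lam x y := add (opp x) (circ x y).
Definition star x y := add (lam x y) (opp y).
Definition comm_add x y := grp_comm add opp x y.

Definition starset (X Y : {set T}) : {set T} :=
  gen_grp add opp z [set star x y | x in X, y in Y].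

(* left series: lser n = A^(n+1) ; right series: rser n = A^((n+1)) *)
Fixpoint lser (n : nat) : {set T} :=
  if n is m.+1 then starset [set: T] (lser m) else [set: T].
Fixpoint rser (n : nat) : {set T} :=
  if n is m.+1 then starset (rser m) [set: T] else [set: T].

Definition left_star_nilpotent : Prop := exists n, lser n = [set z].
Definition right_star_nilpotent : Prop := exists n, rser n = [set z].
Definition star_nilpotent : Prop := left_star_nilpotent /\ right_star_nilpotent.

Definition nilpotent_type : Prop := nilpotent_grp add opp z.

Definition ideal (I : {set T}) : Prop :=
  [/\ is_subgrp add opp z I,
      (forall a x, x \in I -> lam a x \in I),
      (forall a x, x \in I -> add (add a x) (opp a) \in I),
      is_subgrp circ cinv z I &
      (forall a x, x \in I -> circ (circ a x) (cinv a) \in I)].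

(* x + J lies in the center of A/J  (J an ideal), written out:
   x*y, y*x, [x,y]_+ all lie in J for every y *)
Definition central_mod (J : {set T}) (x : T) : Prop :=
  forall y, [/\ star x y \in J, star y x \in J & comm_add x y \in J].

Definition centrally_nilpotent : Prop :=
  exists (n : nat) (I : nat -> {set T}),
    [/\ I 0 = [set z], I n = [set: T],
        (forall j, j <= n -> ideal (I j)),
        (forall j, j < n -> I j \subset I j.+1) &
        (forall j, j < n -> forall x, x \in I j.+1 -> central_mod (I j) x)].
End SkewBrace.

(* Main.v *)
Require Import Defs.
From mathcomp Require Import all_boot.
Set Implicit Arguments. Unset Strict Implicit. Unset Printing Implicit Defensive.

Lemma subgrpP (T : finType) (op : T -> T -> T) inv e (H : {set T}) :
  reflect [/\ e \in H, (forall x y, x \in H -> y \in H -> op x y \in H)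
            & (forall x, x \in H -> inv x \in H)] (is_subgrp op inv e H).
Proof.
apply: (iffP and3P) => [[He /forall_inP Hop /forall_inP Hinv]|[He Hop Hinv]].
  split=> // x y xH yH; have /forall_inP := Hop x xH; exact.
split=> //; apply/forall_inP => x xH //; first apply/forall_inP => y yH; auto.
Qed.

Section Grp.
Variables (T : finType) (op : T -> T -> T) (inv : T -> T) (e : T).
Hypothesis G : is_group op inv e.

Lemma opA x y w : op x (op y w) = op (op x y) w. Proof. by case: G. Qed.
Lemma op1l x : op e x = x. Proof. by case: G. Qed.
Lemma op1r x : op x e = x. Proof. by case: G. Qed.
Lemma opVl x : op (inv x) x = e. Proof. by case: G. Qed.
Lemma opVr x : op x (inv x) = e. Proof. by case: G. Qed.

Lemma opKl x y : op (inv x) (op x y) = y.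
Proof. by rewrite opA opVl op1l. Qed.
Lemma opKVl x y : op x (op (inv x) y) = y.
Proof. by rewrite opA opVr op1l. Qed.
Lemma opKr x y : op (op y x) (inv x) = y.
Proof. by rewrite -opA opVr op1r. Qed.
Lemma opKVr x y : op (op y (inv x)) x = y.
Proof. by rewrite -opA opVl op1r. Qed.
Lemma inv_uniq x y : op x y = e -> inv x = y.
Proof. by move=> h; rewrite -[inv x]op1r -h opKl. Qed.
Lemma inv_uniql x y : op x y = e -> x = inv y.
Proof. by move=> h; rewrite -[inv y]op1l -h opKr. Qed.
Lemma invK x : inv (inv x) = x.
Proof. by apply: inv_uniq; rewrite opVl. Qed.
Lemma inv1 : inv e = e.
Proof. by apply: inv_uniq; rewrite op1l. Qed.
Lemma inv_op x y : inv (op x y) = op (inv y) (inv x).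
Proof. by apply: inv_uniq; rewrite opA opKr opVr. Qed.
Lemma op_injl x y w : op x y = op x w -> y = w.
Proof. by move=> h; rewrite -(opKl x y) h opKl. Qed.
Lemma op_injr x y w : op y x = op w x -> y = w.
Proof. by move=> h; rewrite -(opKr x y) h opKr. Qed.

Lemma comm_inv x y : inv (grp_comm op inv x y) = grp_comm op inv y x.
Proof. by rewrite /grp_comm !inv_op !invK !opA. Qed.

Lemma subgrpT : is_subgrp op inv e [set: T].
Proof. by apply/subgrpP; split=> *; rewrite inE. Qed.

Lemma subgrp1 : is_subgrp op inv e [set e].
Proof.
apply/subgrpP; split; first by rewrite inE.
  by move=> x y /set1P-> /set1P->; rewrite op1l inE.
by move=> x /set1P->; rewrite inv1 inE.
Qed.

Lemma gen_sub (X : {set T}) : is_subgrp op inv e (gen_grp op inv e X).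
Proof.
apply/subgrpP; split.
- by apply/bigcapP => H /andP[/subgrpP[]].
- move=> x y /bigcapP xH /bigcapP yH; apply/bigcapP => H HH.
  have := HH; case/andP => /subgrpP[_ Hop _] _; apply: Hop; auto.
- move=> x /bigcapP xH; apply/bigcapP => H HH.
  have := HH; case/andP => /subgrpP[_ _ Hinv] _; apply: Hinv; auto.
Qed.

Lemma gen_incl (X : {set T}) x : x \in X -> x \in gen_grp op inv e X.
Proof. by move=> xX; apply/bigcapP => H /andP[_ /subsetP]; apply. Qed.

Lemma gen_min (X H : {set T}) : is_subgrp op inv e H -> X \subset H ->
  gen_grp op inv e X \subset H.
Proof. by move=> sH XH; apply/subsetP => x /bigcapP; apply; rewrite sH. Qed.

Lemma lcs_sub m : is_subgrp op inv e (lcs op inv e m).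
Proof. by case: m => [|m] /=; [apply: subgrpT | apply: gen_sub]. Qed.

Lemma lcs_comm m x y : y \in lcs op inv e m -> grp_comm op inv x y \in lcs op inv e m.+1.
Proof. by move=> yl; rewrite /= gen_incl //; apply/imset2P; exists x y; rewrite ?inE. Qed.

Lemma lcs_comm' m x y : x \in lcs op inv e m -> grp_comm op inv x y \in lcs op inv e m.+1.
Proof.
move=> xl; rewrite -comm_inv; case/subgrpP: (lcs_sub m.+1) => _ _; apply.
exact: lcs_comm.
Qed.

Lemma preim_sub (f : T -> T) (H : {set T}) : is_subgrp op inv e H ->
  f e = e -> (forall x y, f (op x y) = op (f x) (f y)) -> (forall x, f (inv x) = inv (f x)) ->
  is_subgrp op inv e [set x | f x \in H].
Proof.
case/subgrpP=> He Hop Hinv f1 fM fV; apply/subgrpP; split; rewrite ?inE ?f1 //.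
  by move=> x y; rewrite !inE fM; apply: Hop.
by move=> x; rewrite !inE fV; apply: Hinv.
Qed.

End Grp.

Lemma last_true (P : nat -> bool) n : P 0 -> ~~ P n -> exists k, P k && ~~ P k.+1.
Proof.
elim: n => [|n IH] P0 Pn; first by rewrite P0 in Pn.
case: (boolP (P n)) => Pn'; first by exists n; rewrite Pn'.
exact: IH.
Qed.

Section Brace.
Variables (T : finType) (add : T -> T -> T) (opp : T -> T) (z : T)
          (circ : T -> T -> T) (cinv : T -> T).
Hypothesis HA : skew_brace add opp z circ cinv.

Let GA : is_group add opp z. Proof. by case: HA. Qed.
Let GC : is_group circ cinv z. Proof. by case: HA. Qed.
Let distr x y w : circ x (add y w) = add (add (circ x y) (opp x)) (circ x w).
Proof. by case: HA. Qed.

Local Notation "x ⊕ y" := (add x y) (at level 50, left associativity).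
Local Notation "x ⊙ y" := (circ x y) (at level 40, left associativity).
Local Notation lam := (lam add opp circ).
Local Notation star := (star add opp circ).

Lemma lamE x y : lam x y = opp x ⊕ (x ⊙ y). Proof. by []. Qed.
Lemma circE x y : x ⊙ y = x ⊕ lam x y. Proof. by rewrite lamE (opKVl GA). Qed.
Lemma starE x y : star x y = lam x y ⊕ opp y. Proof. by []. Qed.

Lemma lam_add x y w : lam x (y ⊕ w) = lam x y ⊕ lam x w.
Proof. by rewrite !lamE distr -!(opA GA). Qed.
Lemma lam_z x : lam x z = z.
Proof. by rewrite lamE (op1r GC) (opVl GA). Qed.
Lemma lam_opp x y : lam x (opp y) = opp (lam x y).
Proof.
symmetry; apply: (inv_uniq GA); rewrite -lam_add (opVr GA); exact: lam_z.
Qed.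
Lemma lam1 y : lam z y = y.
Proof. by rewrite lamE (op1l GC) (inv1 GA) (op1l GA). Qed.
Lemma lam_circ x y w : lam (x ⊙ y) w = lam x (lam y w).
Proof.
rewrite [lam y w]lamE lam_add lam_opp [lam x y]lamE [lam x (y ⊙ w)]lamE.
by rewrite (inv_op GA) (invK GA) -(opA GA) (opKVl GA) (opA GC).
Qed.
Lemma lamK x y : lam x (lam (cinv x) y) = y.
Proof. by rewrite -lam_circ (opVr GC) lam1. Qed.
Lemma lamKV x y : lam (cinv x) (lam x y) = y.
Proof. by rewrite -lam_circ (opVl GC) lam1. Qed.
Lemma lam_cinv x : lam x (cinv x) = opp x.
Proof. by rewrite lamE (opVr GC) (op1r GA). Qed.
Lemma cinv_lam x : cinv x = opp (lam (cinv x) x).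
Proof. apply: (inv_uniql GA); by rewrite -circE (opVl GC). Qed.

Lemma comm_inv_add x y : comm_add add opp x y = x ⊕ y ⊕ opp (y ⊕ x).
Proof. by rewrite /comm_add /grp_comm (inv_op GA) !(opA GA). Qed.

Lemma ideal1 : ideal add opp z circ cinv [set z].
Proof.
split; first exact: subgrp1.
- by move=> a x /set1P->; rewrite lam_z inE.
- by move=> a x /set1P->; rewrite (op1r GA) (opVr GA) inE.
- exact: subgrp1.
- by move=> a x /set1P->; rewrite (op1r GC) (opVr GC) inE.
Qed.

Lemma idealT : ideal add opp z circ cinv [set: T].
Proof. by split; try exact: subgrpT; move=> *; rewrite inE. Qed.

Section Cong.
Variable J : {set T}.
Hypothesis HJ : ideal add opp z circ cinv J.

Let J0 : z \in J. Proof. by case: HJ => /subgrpP[]. Qed.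
Let Jadd x y : x \in J -> y \in J -> x ⊕ y \in J.
Proof. by case: HJ => /subgrpP[_ h _] _ _ _ _; apply: h. Qed.
Let Jopp x : x \in J -> opp x \in J.
Proof. by case: HJ => /subgrpP[_ _ h] _ _ _ _; apply: h. Qed.
Let Jlam a x : x \in J -> lam a x \in J.
Proof. by case: HJ => _ h _ _ _; apply: h. Qed.
Let Jnorm a x : x \in J -> a ⊕ x ⊕ opp a \in J.
Proof. by case: HJ => _ _ h _ _; apply: h. Qed.
Let Jcirc x y : x \in J -> y \in J -> x ⊙ y \in J.
Proof. by case: HJ => _ _ _ /subgrpP[_ h _] _; apply: h. Qed.
Let Jcinv x : x \in J -> cinv x \in J.
Proof. by case: HJ => _ _ _ /subgrpP[_ _ h] _; apply: h. Qed.
Let Jcnorm a x : x \in J -> a ⊙ x ⊙ cinv a \in J.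
Proof. by case: HJ => _ _ _ _ h; apply: h. Qed.

Definition cg a b := opp a ⊕ b \in J.

Lemma Jconj a x : (a ⊕ x ⊕ opp a \in J) = (x \in J).
Proof.
apply/idP/idP => [h|]; last exact: Jnorm.
have := Jnorm (opp a) h; by rewrite (invK GA) !(opA GA) (opVl GA) (op1l GA) (opKVr GA).
Qed.

Lemma Jsw u v : (u ⊕ opp v \in J) = (opp v ⊕ u \in J).
Proof. by rewrite -[RHS](Jconj v) (opKVl GA). Qed.

Lemma cgP a b : cg a b -> exists2 j, j \in J & b = a ⊕ j.
Proof. by move=> h; exists (opp a ⊕ b) => //; rewrite (opKVl GA). Qed.
Lemma cgJ a j : j \in J -> cg a (a ⊕ j).
Proof. by rewrite /cg (opKl GA). Qed.
Lemma cgJl a j : j \in J -> cg a (j ⊕ a).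
Proof. by move=> h; rewrite /cg (opA GA); have := Jnorm (opp a) h; rewrite (invK GA). Qed.
Lemma cg_refl a : cg a a. Proof. by rewrite /cg (opVl GA). Qed.
Lemma cg_sym a b : cg a b -> cg b a.
Proof. by move=> h; have := Jopp h; rewrite (inv_op GA) (invK GA). Qed.
Lemma cg_trans b a c : cg a b -> cg b c -> cg a c.
Proof. by move=> h1 h2; have := Jadd h1 h2; rewrite -(opA GA) (opKVl GA). Qed.
Lemma cg_addl c a b : cg a b -> cg (c ⊕ a) (c ⊕ b).
Proof. by rewrite /cg (inv_op GA) -(opA GA) (opKl GA). Qed.
Lemma cg_cancl c a b : cg (c ⊕ a) (c ⊕ b) -> cg a b.
Proof. by rewrite /cg (inv_op GA) -(opA GA) (opKl GA). Qed.
Lemma cg_addr c a b : cg a b -> cg (a ⊕ c) (b ⊕ c).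
Proof.
move=> h; have := Jnorm (opp c) h.
by rewrite /cg (invK GA) (inv_op GA) !(opA GA).
Qed.
Lemma cg_add a b c d : cg a b -> cg c d -> cg (a ⊕ c) (b ⊕ d).
Proof. by move=> h1 h2; apply: (cg_trans (cg_addr c h1)); apply: cg_addl. Qed.
Lemma cg_opp a b : cg a b -> cg (opp a) (opp b).
Proof.
case/cgP=> j jJ ->; rewrite /cg (invK GA) (inv_op GA) (opA GA).
exact: Jnorm (Jopp jJ).
Qed.
Lemma cgz j : j \in J -> cg z j.
Proof. by move=> h; rewrite /cg (inv1 GA) (op1l GA). Qed.
Lemma cg_lamr c a b : cg a b -> cg (lam c a) (lam c b).
Proof. by case/cgP=> j jJ ->; rewrite lam_add; apply: cgJ; apply: Jlam. Qed.
Lemma cg_circr c a b : cg a b -> cg (c ⊙ a) (c ⊙ b).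
Proof. by move=> h; rewrite !circE; apply: cg_addl; apply: cg_lamr. Qed.
Lemma cg_circJ a j : j \in J -> cg a (a ⊙ j).
Proof. by move=> h; rewrite circE; apply: cgJ; apply: Jlam. Qed.
Lemma cgPc a b : cg a b -> exists2 j, j \in J & b = a ⊙ j.
Proof.
move=> h; exists (lam (cinv a) (opp a ⊕ b)); first exact: Jlam.
by rewrite circE lamK (opKVl GA).
Qed.
Lemma lamJ j y : j \in J -> cg y (lam j y).
Proof.
move=> jJ.
have j'J : cinv y ⊙ j ⊙ y \in J.
  by have := Jcnorm (cinv y) jJ; rewrite (invK GC).
have -> : lam j y = opp j ⊕ (y ⊙ (cinv y ⊙ j ⊙ y)).
  by rewrite lamE !(opA GC) (opVr GC) (op1l GC).
apply: (cg_trans (cgJl y (Jopp jJ))); apply: cg_addl; exact: cg_circJ.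
Qed.
Lemma cg_laml w a b : cg a b -> cg (lam a w) (lam b w).
Proof.
case/cgPc=> j jJ ->; rewrite lam_circ; apply: cg_lamr; exact: lamJ.
Qed.
Lemma cg_circl c a b : cg a b -> cg (a ⊙ c) (b ⊙ c).
Proof. by move=> h; rewrite !circE; apply: cg_add => //; apply: cg_laml. Qed.
Lemma cg_circ_div u v : cg v u -> u ⊙ cinv v \in J.
Proof. by case/cgPc=> j jJ ->; apply: Jcnorm. Qed.
Lemma cg_of_circ u v : u ⊙ cinv v \in J -> cg v u.
Proof.
move=> h; have h' := Jcnorm (cinv v) h; rewrite (invK GC) in h'.
have := cg_circJ v h'; by rewrite !(opA GC) (opVr GC) (op1l GC) (opKVr GC).
Qed.
Lemma star_cg x y : (star x y \in J) = cg y (lam x y).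
Proof. by rewrite starE Jsw. Qed.
Lemma comm_cg x y : (comm_add add opp x y \in J) = cg (y ⊕ x) (x ⊕ y).
Proof. by rewrite comm_inv_add Jsw. Qed.


Definition Lt x := forall y, cg y (lam x y).
Definition Cm x := forall y, cg (y ⊕ x) (x ⊕ y).
Definition Fx x := forall y, cg x (lam y x).

Lemma Lt_cg x x' : cg x x' -> Lt x -> Lt x'.
Proof. by move=> h L y; apply: (cg_trans (L y)); apply: cg_laml. Qed.
Lemma Cm_cg x x' : cg x x' -> Cm x -> Cm x'.
Proof.
move=> h C y; apply: (cg_trans (cg_addl y (cg_sym h))).
apply: (cg_trans (C y)); exact: cg_addr.
Qed.
Lemma Fx_cg x x' : cg x x' -> Fx x -> Fx x'.
Proof.
move=> h F y; apply: (cg_trans (cg_sym h)); apply: (cg_trans (F y)).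
exact: cg_lamr.
Qed.

Lemma Lt_z : Lt z. Proof. by move=> y; rewrite lam1; apply: cg_refl. Qed.
Lemma Cm_z : Cm z. Proof. by move=> y; rewrite (op1l GA) (op1r GA); apply: cg_refl. Qed.
Lemma Fx_z : Fx z. Proof. by move=> y; rewrite lam_z; apply: cg_refl. Qed.

Lemma Lt_circ x x' : Lt x -> Lt x' -> Lt (x ⊙ x').
Proof. by move=> L L' y; rewrite lam_circ; apply: (cg_trans (L' y)); apply: L. Qed.
Lemma Lt_circ_add x x' : Lt x -> cg (x ⊕ x') (x ⊙ x').
Proof. by move=> L; rewrite circE; apply: cg_addl; apply: L. Qed.
Lemma Lt_add x x' : Lt x -> Lt x' -> Lt (x ⊕ x').
Proof.
move=> L L'; apply: (Lt_cg (cg_sym (Lt_circ_add x' L))); exact: Lt_circ.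
Qed.
Lemma Lt_cinv x : Lt x -> Lt (cinv x).
Proof. by move=> L y; have := L (lam (cinv x) y); rewrite lamK; apply: cg_sym. Qed.
Lemma Lt_cinv_opp x : Lt x -> cg (cinv x) (opp x).
Proof.
move=> L; rewrite [X in cg X _]cinv_lam; apply: cg_sym; apply: cg_opp.
exact: (Lt_cinv L).
Qed.
Lemma Lt_opp x : Lt x -> Lt (opp x).
Proof. by move=> L; apply: (Lt_cg (Lt_cinv_opp L)); apply: Lt_cinv. Qed.
Lemma Lt_conj g x : Lt x -> Lt (g ⊙ x ⊙ cinv g).
Proof.
move=> L y; rewrite !lam_circ; apply: (@cg_trans (lam g (lam (cinv g) y))).
  by rewrite lamK; apply: cg_refl.
by apply: cg_lamr; apply: L.
Qed.

Lemma Cm_add x x' : Cm x -> Cm x' -> Cm (x ⊕ x').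
Proof.
move=> C C' y; rewrite (opA GA); apply: (cg_trans (cg_addr x' (C y))).
rewrite -!(opA GA); apply: cg_addl; exact: C'.
Qed.
Lemma Cm_opp x : Cm x -> Cm (opp x).
Proof.
move=> C y; apply: cg_sym; have := cg_opp (C (opp y)).
by rewrite !(inv_op GA) (invK GA).
Qed.
Lemma Cm_lam g x : Cm x -> Cm (lam g x).
Proof.
move=> C y; rewrite -[y](lamK g) -!lam_add; apply: cg_lamr; exact: C.
Qed.
Lemma Fx_add x x' : Fx x -> Fx x' -> Fx (x ⊕ x').
Proof. by move=> F F' y; rewrite lam_add; apply: cg_add. Qed.
Lemma Fx_opp x : Fx x -> Fx (opp x).
Proof. by move=> F y; rewrite lam_opp; apply: cg_opp. Qed.

Lemma conj_cg g x : Lt x -> Cm x -> cg (g ⊙ x ⊙ cinv g) (lam g x).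
Proof.
move=> L C; rewrite -(opA GC).
have h1 : cg (g ⊙ (x ⊙ cinv g)) (g ⊙ (x ⊕ cinv g)).
  by apply: cg_circr; apply: cg_sym; apply: Lt_circ_add.
apply: (cg_trans h1); rewrite circE lam_add lam_cinv (opA GA).
have := cg_addr (opp g) (Cm_lam g C g); by rewrite (opKr GA).
Qed.

Lemma S_lam g x : Lt x -> Cm x -> Lt (lam g x).
Proof. by move=> L C; apply: (Lt_cg (conj_cg g L C)); apply: Lt_conj. Qed.

Definition Zset := [set x | [forall y, [&& star x y \in J, star y x \in J
                                         & comm_add add opp x y \in J]]].

Lemma ZsetP x : reflect (Lt x /\ Fx x /\ Cm x) (x \in Zset).
Proof.
rewrite inE; apply: (iffP forallP) => [h|[L [F C]] y].
  split; [|split] => y; have /and3P[h1 h2 h3] := h y.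
  - by rewrite -star_cg.
  - by rewrite -star_cg.
  - by rewrite -comm_cg.
by rewrite star_cg L star_cg F comm_cg C.
Qed.

Lemma Zset_central x : x \in Zset -> central_mod add opp circ J x.
Proof.
by rewrite inE => /forallP h y; have /and3P[? ? ?] := h y; split.
Qed.

Lemma Z_cg x x' : cg x x' -> x \in Zset -> x' \in Zset.
Proof.
move=> h /ZsetP[L [F C]]; apply/ZsetP; split; first exact: Lt_cg L.
by split; [apply: Fx_cg F | apply: Cm_cg C].
Qed.

Lemma Zz : z \in Zset.
Proof. by apply/ZsetP; split; [apply: Lt_z | split; [apply: Fx_z|apply: Cm_z]]. Qed.

Lemma JZ : J \subset Zset.
Proof. by apply/subsetP => j jJ; apply: (Z_cg (cgz jJ)); apply: Zz. Qed.

Lemma Z_add x x' : x \in Zset -> x' \in Zset -> x ⊕ x' \in Zset.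
Proof.
move=> /ZsetP[L [F C]] /ZsetP[L' [F' C']]; apply/ZsetP.
split; first exact: Lt_add. by split; [apply: Fx_add | apply: Cm_add].
Qed.
Lemma Z_opp x : x \in Zset -> opp x \in Zset.
Proof.
move=> /ZsetP[L [F C]]; apply/ZsetP.
split; first exact: Lt_opp. by split; [apply: Fx_opp | apply: Cm_opp].
Qed.

Lemma Zideal : ideal add opp z circ cinv Zset.
Proof.
split.
- apply/subgrpP; split; [exact: Zz | exact: Z_add | exact: Z_opp].
- move=> a x xZ; apply: (Z_cg _ xZ); case/ZsetP: xZ => _ [F _]; exact: F.
- move=> a x xZ; apply: (Z_cg _ xZ); case/ZsetP: xZ => _ [_ C].
  by apply: cg_sym; have := cg_addr (opp a) (C a); rewrite (opKr GA).
- apply/subgrpP; split; first exact: Zz.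
  + move=> x x' xZ x'Z; apply: (Z_cg _ (Z_add xZ x'Z)).
    by case/ZsetP: xZ => L _; apply: Lt_circ_add.
  + move=> x xZ; apply: (Z_cg _ (Z_opp xZ)); apply: cg_sym.
    by case/ZsetP: xZ => L _; apply: Lt_cinv_opp.
- move=> a x xZ; apply: (Z_cg _ xZ); case/ZsetP: xZ => L [F C].
  apply: cg_sym; apply: (cg_trans (conj_cg a L C)); apply: cg_sym; exact: F.
Qed.

End Cong.

Local Notation starset := (starset add opp z circ).
Local Notation rser := (rser add opp z circ).
Local Notation lser := (lser add opp z circ).

Lemma conj_z a : a ⊕ z ⊕ opp a = z.
Proof. by rewrite (op1r GA) (opVr GA). Qed.
Lemma conj_add a u v : a ⊕ (u ⊕ v) ⊕ opp a = (a ⊕ u ⊕ opp a) ⊕ (a ⊕ v ⊕ opp a).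
Proof. by rewrite !(opA GA) (opKVr GA). Qed.
Lemma conj_opp a u : a ⊕ opp u ⊕ opp a = opp (a ⊕ u ⊕ opp a).
Proof. by rewrite !(inv_op GA) (invK GA) (opA GA). Qed.

Lemma lam_star a x y : lam a (star x y) = star (a ⊙ x ⊙ cinv a) (lam a y).
Proof. by rewrite !starE lam_add lam_opp !lam_circ lamKV. Qed.

Lemma conj_star a x y : a ⊕ star x y ⊕ opp a = opp (star x a) ⊕ star x (a ⊕ y).
Proof.
rewrite !starE lam_add [opp (lam x a ⊕ _)](inv_op GA) (invK GA).
rewrite [opp (a ⊕ y)](inv_op GA); move: (lam x a) (lam x y) => u v.
by rewrite !(opA GA) (opKVr GA).
Qed.

Lemma star_in (X Y : {set T}) x y : x \in X -> y \in Y -> star x y \in starset X Y.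
Proof. by move=> xX yY; rewrite /Defs.starset; apply: gen_incl; apply/imset2P; exists x y. Qed.

Lemma starset_sub (X Y : {set T}) : is_subgrp add opp z (starset X Y).
Proof. exact: gen_sub. Qed.

Section Cong2.
Variable J : {set T}.
Hypothesis HJ : ideal add opp z circ cinv J.
Let JS : is_subgrp add opp z J. Proof. by case: HJ. Qed.

Lemma starset_ideal : ideal add opp z circ cinv (starset J [set: T]).
Proof.
set K := starset J [set: T].
have KS : is_subgrp add opp z K by apply: starset_sub.
case/subgrpP: (KS) => Kz Kadd Kopp.
have KJ : K \subset J.
  apply: (gen_min JS); apply/subsetP => _ /imset2P[x y xJ _ ->].
  by rewrite (star_cg HJ); apply: lamJ.
have Klam a u : u \in K -> lam a u \in K.
  have sub : K \subset [set u | lam a u \in K].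
    apply: gen_min; first by apply: (preim_sub KS (lam_z a) (lam_add a) (lam_opp a)).
    apply/subsetP => _ /imset2P[x y xJ _ ->]; rewrite inE lam_star.
    by apply: star_in; [case: HJ => _ _ _ _; apply | rewrite inE].
  by move=> uK; have := subsetP sub u uK; rewrite inE.
have Knorm a u : u \in K -> a ⊕ u ⊕ opp a \in K.
  have sub : K \subset [set u | a ⊕ u ⊕ opp a \in K].
    apply: gen_min; first by apply: (preim_sub KS (conj_z a) (conj_add a) (conj_opp a)).
    apply/subsetP => _ /imset2P[x y xJ _ ->]; rewrite inE conj_star.
    by apply: Kadd; [apply: Kopp |]; apply: star_in; rewrite ?inE.
  by move=> uK; have := subsetP sub u uK; rewrite inE.
have KsT u y : u \in K -> star u y \in K.
  by move=> uK; apply: star_in; rewrite ?inE // (subsetP KJ).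
split=> //.
- apply/subgrpP; split=> //.
  + by move=> u v uK vK; rewrite circE; apply: Kadd => //; apply: Klam.
  + by move=> u uK; rewrite cinv_lam; apply: Kopp; apply: Klam.
- move=> a u uK.
  have -> : a ⊙ u ⊙ cinv a = a ⊕ (lam a u ⊕ lam a (star u (cinv a))) ⊕ opp a.
    rewrite -(opA GC) circE [u ⊙ _]circE.
    have -> : lam u (cinv a) = star u (cinv a) ⊕ cinv a by rewrite starE (opKVr GA).
    by rewrite !lam_add lam_cinv !(opA GA).
  by apply: Knorm; apply: Kadd; apply: Klam => //; apply: KsT.
Qed.

End Cong2.

Lemma rser_ideal k : ideal add opp z circ cinv (rser k).
Proof. elim: k => [|k IH] /=; [exact: idealT | exact: starset_ideal]. Qed.

Section Cong3.
Variable J : {set T}.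
Hypothesis HJ : ideal add opp z circ cinv J.
Let J0 : z \in J. Proof. by case: HJ => /subgrpP[]. Qed.

Definition SS := [set s | [forall y, cg J y (lam s y)] && [forall y, cg J (y ⊕ s) (s ⊕ y)]].

Lemma SSP s : reflect (Lt J s /\ Cm J s) (s \in SS).
Proof.
rewrite inE; apply: (iffP andP) => [[/forallP h1 /forallP h2]|[h1 h2]]; split=> //.
  by apply/forallP.
by apply/forallP.
Qed.

Lemma SS_circ s t : s \in SS -> t \in SS -> s ⊙ t \in SS.
Proof.
case/SSP=> L C /SSP[L' C']; apply/SSP; split; first exact (Lt_circ HJ L L').
exact (Cm_cg HJ (Lt_circ_add t L) (Cm_add HJ C C')).
Qed.
Lemma SS_add s t : s \in SS -> t \in SS -> s ⊕ t \in SS.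
Proof.
case/SSP=> L C /SSP[L' C']; apply/SSP; split; first exact (Lt_add HJ L L').
exact (Cm_add HJ C C').
Qed.
Lemma SS_opp s : s \in SS -> opp s \in SS.
Proof.
case/SSP=> L C; apply/SSP; split; first exact (Lt_opp HJ L). exact (Cm_opp HJ C).
Qed.
Lemma SS_cinv s : s \in SS -> cinv s \in SS.
Proof.
case/SSP=> L C; apply/SSP; split; first exact (Lt_cinv HJ L).
exact (Cm_cg HJ (cg_sym HJ (Lt_cinv_opp HJ L)) (Cm_opp HJ C)).
Qed.
Lemma SS_lam g s : s \in SS -> lam g s \in SS.
Proof.
case/SSP=> L C; apply/SSP; split; first exact (S_lam HJ g L C). exact (Cm_lam HJ g C).
Qed.
Lemma SS_conj g s : s \in SS -> g ⊙ s ⊙ cinv g \in SS.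
Proof.
case/SSP=> L C; apply/SSP; split; first exact (Lt_conj HJ g L).
exact (Cm_cg HJ (cg_sym HJ (conj_cg HJ g L C)) (Cm_lam HJ g C)).
Qed.

Lemma exS nr na x0 : rser nr = [set z] -> lcs add opp z na = [set z] ->
  x0 \notin J -> exists2 x, x \notin J & x \in SS.
Proof.
move=> Hr Ha x0J.
have [k /andP[Pk Pk1]] : exists k, ~~ (rser k \subset J) && ~~ ~~ (rser k.+1 \subset J).
  apply: (@last_true (fun k => ~~ (rser k \subset J)) nr).
  - apply/negP => /subsetP h; by have := h x0 (in_setT x0); rewrite (negbTE x0J).
  - by rewrite Hr sub1set J0.
rewrite negbK in Pk1.
have HR := rser_ideal k.
have RL r : r \in rser k -> Lt J r.
  move=> rR y; rewrite -(star_cg HJ); apply: (subsetP Pk1).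
  exact: (star_in rR (in_setT y)).
have [m /andP[Pm Pm1]] : exists m, ~~ (rser k :&: lcs add opp z m \subset J)
                             && ~~ ~~ (rser k :&: lcs add opp z m.+1 \subset J).
  apply: (@last_true (fun m => ~~ (rser k :&: lcs add opp z m \subset J)) na).
    by rewrite /= setIT.
  by rewrite Ha negbK; apply: subset_trans (subsetIr _ _) _; rewrite sub1set.
rewrite negbK in Pm1; case/subsetPn: Pm => x /setIP[xR xl] xJ.
exists x => //; apply/SSP; split; first exact: RL.
move=> y; rewrite -(comm_cg HJ); apply: (subsetP Pm1); apply/setIP; split.
  have -> : comm_add add opp x y = x ⊕ (y ⊕ opp x ⊕ opp y).
    by rewrite /comm_add /grp_comm !(opA GA).
  case: HR => /subgrpP[_ Radd Ropp] _ Rn _ _; apply: (Radd _ _ xR); apply: Rn; exact: Ropp.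
exact: (lcs_comm' GA).
Qed.

Lemma Zex_l nr na nl x0 : rser nr = [set z] -> lcs add opp z na = [set z] ->
  lser nl = [set z] -> x0 \notin J -> exists2 s, s \notin J & s \in Zset J.
Proof.
move=> Hr Ha Hl x0J; have [x xJ xS] := exS Hr Ha x0J.
have [p /andP[Pp Pp1]] : exists p, ~~ (SS :&: lser p \subset J)
                             && ~~ ~~ (SS :&: lser p.+1 \subset J).
  apply: (@last_true (fun p => ~~ (SS :&: lser p \subset J)) nl).
  - by rewrite /= setIT; apply/subsetPn; exists x.
  - by rewrite Hl negbK; apply: subset_trans (subsetIr _ _) _; rewrite sub1set.
rewrite negbK in Pp1; case/subsetPn: Pp => s /setIP[sS sl] sJ.
exists s => //; apply/(ZsetP HJ); have /SSP[L C] := sS; split=> //; split=> // g.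
rewrite -(star_cg HJ); apply: (subsetP Pp1); apply/setIP; split.
  by rewrite starE; apply: SS_add; [apply: SS_lam | apply: SS_opp].
exact: (star_in (in_setT g) sl).
Qed.

Lemma Zex_c nr na nc x0 : rser nr = [set z] -> lcs add opp z na = [set z] ->
  lcs circ cinv z nc = [set z] -> x0 \notin J -> exists2 s, s \notin J & s \in Zset J.
Proof.
move=> Hr Ha Hc x0J; have [x xJ xS] := exS Hr Ha x0J.
have [p /andP[Pp Pp1]] : exists p, ~~ (SS :&: lcs circ cinv z p \subset J)
                             && ~~ ~~ (SS :&: lcs circ cinv z p.+1 \subset J).
  apply: (@last_true (fun p => ~~ (SS :&: lcs circ cinv z p \subset J)) nc).
  - by rewrite /= setIT; apply/subsetPn; exists x.
  - by rewrite Hc negbK; apply: subset_trans (subsetIr _ _) _; rewrite sub1set.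
rewrite negbK in Pp1; case/subsetPn: Pp => s /setIP[sS sl] sJ.
exists s => //; apply/(ZsetP HJ); have /SSP[L C] := sS; split=> //; split=> // g.
have cJ : grp_comm circ cinv s g \in J.
  apply: (subsetP Pp1); apply/setIP; split; last exact: (lcs_comm' GC).
  have -> : grp_comm circ cinv s g = s ⊙ (g ⊙ cinv s ⊙ cinv g).
    by rewrite /grp_comm !(opA GC).
  by apply: SS_circ => //; apply: SS_conj; apply: SS_cinv.
have h1 : cg J (g ⊙ s) (s ⊙ g).
  by apply: (cg_of_circ HJ); rewrite (inv_op GC) !(opA GC).
have h2 : cg J (g ⊕ lam g s) (g ⊕ s).
  rewrite -circE; apply: (cg_trans HJ h1); rewrite circE.
  apply: (cg_trans HJ (cg_sym HJ (cg_addl s (L g)))); exact (cg_sym HJ (C g)).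
exact (cg_sym HJ (cg_cancl h2)).
Qed.

Lemma circ_comm_central x y : central_mod add opp circ J y ->
  grp_comm circ cinv x y \in J.
Proof.
move=> cen; have [h1 h2 h3] := cen x.
have -> : grp_comm circ cinv x y = (x ⊙ y) ⊙ cinv (y ⊙ x).
  by rewrite (inv_op GC) /grp_comm !(opA GC).
apply: (cg_circ_div HJ); rewrite !circE.
rewrite (star_cg HJ) in h1; rewrite (star_cg HJ) in h2; rewrite (comm_cg HJ) in h3.
apply: (cg_trans HJ (cg_sym HJ (cg_addl y h1))).
apply: (cg_trans HJ (cg_sym HJ h3)); exact (cg_addl x h2).
Qed.

End Cong3.

Fixpoint zeta k := if k is m.+1 then Zset (zeta m) else [set z].

Lemma zeta_ideal k : ideal add opp z circ cinv (zeta k).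
Proof. elim: k => [|k IH] /=; [exact: ideal1 | exact: Zideal]. Qed.

Lemma cn_of (Hex : forall J, ideal add opp z circ cinv J -> forall x0, x0 \notin J ->
                     exists2 s, s \notin J & s \in Zset J) :
  centrally_nilpotent add opp z circ cinv.
Proof.
have grow k : zeta k = [set: T] \/ k < #|zeta k|.
  elim: k => [|k IH]; first by right; rewrite /= cards1.
  case: (boolP ([set: T] \subset zeta k)) => [sT|nsT].
    left; apply/eqP; rewrite eqEsubset subsetT /=.
    exact: subset_trans sT (JZ (zeta_ideal k)).
  case: IH => [E|lt]; first by rewrite E subxx in nsT.
  right; case/subsetPn: nsT => x0 _ x0n.
  have [s sn sZ] := Hex _ (zeta_ideal k) x0 x0n.
  apply: (leq_ltn_trans lt); apply: proper_card; apply/properP; split.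
    exact: JZ (zeta_ideal k).
  by exists s.
exists #|T|, zeta; split=> //.
- case: (grow #|T|) => // lt; exfalso.
  by have := max_card (mem (zeta #|T|)); rewrite leqNgt lt.
- by move=> j _; apply: zeta_ideal.
- by move=> j _; apply: JZ (zeta_ideal j).
- by move=> j _ x xZ; apply: Zset_central.
Qed.

Lemma descend (X I : nat -> {set T}) n : I n = [set: T] ->
  (forall k, k < n -> X k \subset I (n - k) -> X k.+1 \subset I (n - k.+1)) ->
  X n \subset I 0.
Proof.
move=> In step.
have h k : k <= n -> X k \subset I (n - k).
  elim: k => [|k IH] kn; first by rewrite subn0 In subsetT.
  by apply: step => //; apply: IH; apply: ltnW.
by have := h n (leqnn n); rewrite subnn.
Qed.

Lemma eq1 (X : {set T}) op inv : is_subgrp op inv z X -> X \subset [set z] -> X = [set z].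
Proof. by case/subgrpP=> Xz _ _ sub; apply/eqP; rewrite eqEsubset sub sub1set. Qed.

Lemma rser_sub n : is_subgrp add opp z (rser n).
Proof. by case: n => [|n]; [apply: subgrpT | apply: starset_sub]. Qed.
Lemma lser_sub n : is_subgrp add opp z (lser n).
Proof. by case: n => [|n]; [apply: subgrpT | apply: starset_sub]. Qed.

Lemma cn_props : centrally_nilpotent add opp z circ cinv ->
  [/\ left_star_nilpotent add opp z circ, right_star_nilpotent add opp z circ,
      nilpotent_type add opp z & nilpotent_grp circ cinv z].
Proof.
case=> n [I [I0 In Iid Isub Icen]].
have key k : k < n -> exists j, [/\ n - k = j.+1, n - k.+1 = j, j < n,
     ideal add opp z circ cinv (I j) & forall y, y \in I j.+1 -> central_mod add opp circ (I j) y].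
  move=> kn; exists (n - k.+1).
  have jn : n - k.+1 < n by rewrite ltn_subrL (leq_ltn_trans (leq0n k) kn).
  split=> //; first by rewrite subnSK.
    by apply: Iid; apply: ltnW.
  by move=> y; apply: Icen.
split.
- exists n; apply: eq1 (lser_sub n) _; rewrite -I0; apply: descend In _ => k kn.
  have [j [-> -> _ HJ cen]] := key k kn => sX /=.
  apply: gen_min; first by case: HJ.
  apply/subsetP => _ /imset2P[x y _ yX ->].
  by have [] := cen y (subsetP sX y yX) x.
- exists n; apply: eq1 (rser_sub n) _; rewrite -I0; apply: descend In _ => k kn.
  have [j [-> -> _ HJ cen]] := key k kn => sX /=.
  apply: gen_min; first by case: HJ.
  apply/subsetP => _ /imset2P[x y xX _ ->].
  by have [] := cen x (subsetP sX x xX) y.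
- exists n; apply: eq1 (lcs_sub add opp z n) _; rewrite -I0; apply: descend In _ => k kn.
  have [j [-> -> _ HJ cen]] := key k kn => sX /=.
  apply: gen_min; first by case: HJ.
  apply/subsetP => _ /imset2P[x y _ yX ->].
  have [_ _ h] := cen y (subsetP sX y yX) x.
  rewrite -(comm_inv GA); by case: HJ => /subgrpP[_ _ Hopp] _ _ _ _; apply: Hopp.
- exists n; apply: eq1 (lcs_sub circ cinv z n) _; rewrite -I0; apply: descend In _ => k kn.
  have [j [-> -> _ HJ cen]] := key k kn => sX /=.
  apply: gen_min; first by case: HJ.
  apply/subsetP => _ /imset2P[x y _ yX ->].
  exact: (circ_comm_central HJ x (cen y (subsetP sX y yX))).
Qed.

End Brace.

Theorem mainTheorem8 (T : finType) (add : T -> T -> T) (opp : T -> T) (z : T)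
    (circ : T -> T -> T) (cinv : T -> T)
    (HA : skew_brace add opp z circ cinv) :
  ((star_nilpotent add opp z circ /\ nilpotent_type add opp z) <->
   (right_star_nilpotent add opp z circ /\ nilpotent_type add opp z
    /\ nilpotent_grp circ cinv z)) /\
  ((right_star_nilpotent add opp z circ /\ nilpotent_type add opp z
    /\ nilpotent_grp circ cinv z) <->
   centrally_nilpotent add opp z circ cinv).
Proof.
have c1 : star_nilpotent add opp z circ /\ nilpotent_type add opp z ->
          centrally_nilpotent add opp z circ cinv.
  case=> [[[nl Hl] [nr Hr]] [na Ha]]; apply: (cn_of HA) => J HJ x0 x0J.
  exact: (Zex_l HA HJ Hr Ha Hl x0J).
have c2 : right_star_nilpotent add opp z circ /\ nilpotent_type add opp z
          /\ nilpotent_grp circ cinv z -> centrally_nilpotent add opp z circ cinv.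
  case=> [[nr Hr] [[na Ha] [nc Hc]]]; apply: (cn_of HA) => J HJ x0 x0J.
  exact: (Zex_c HA HJ Hr Ha Hc x0J).
have c3 := cn_props HA.
split; split.
- by move/c1/c3 => [].
- by move/c2/c3 => [].
- exact: c2.
- by move/c3 => [].
Qed.
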